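(* Let $\mathcal{L}:\mathbb{R}^p\to\mathbb{R}$ be continuously differentiable, let $\theta_0\in\mathbb{R}^p$, and let $\mathcal{B}(\theta_0)\subseteq\mathbb{R}^p$ be a non-empty set containing $\theta_0$. Let $(\theta_t)_{t\ge0}$ be generated by gradient descent $\theta_{t+1}=\theta_t-\eta_t\nabla_\theta\mathcal{L}(\theta_t)$ with all iterates $\theta_t$, $t\ge1$, in $\mathcal{B}(\theta_0)$. Fix $t$ and suppose: (RSC condition) there is a non-empty set $\mathcal{N}_t$ such that (a) $\mathcal{N}_t\subseteq\mathcal{B}(\theta_0)$; (b) either (b.1) $\theta_{t+1}\in\mathcal{N}_t$ and either $\theta_t\notin\mathcal{N}_t$ or $\mathcal{L}(\theta_t)\ne\inf_{\theta\in\mathcal{N}_t}\mathcal{L}(\theta)$, or (b.2) there exists $\theta'\in\mathcal{N}_t$ with $\mathcal{L}(\theta')<\mathcal{L}(\theta_t)$; and (c) $\mathcal{L}$ satisfies $\alpha_t$-RSC with respect to $(\mathcal{N}_t,\theta_t)$ for some $\alpha_t>0$; (Smoothness condition) for some $\beta>0$, $\mathcal{L}(\theta')\le\mathcal{L}(\theta)+\langle\theta'-\theta,\nabla_\theta\mathcal{L}(\theta)\rangle+\frac{\beta}{2}\|\theta'-\theta\|_2^2$ for all $\theta,\theta'\in\mathcal{B}(\theta_0)$. Assume $\alpha_t\le\beta$ and $\eta_t=\omega_t/\beta$ with $\omega_t\in(0,2)$. Then $$\mathcal{L}(\theta_{t+1})-\inf_{\theta\in\mathcal{N}_t}\mathc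al{L}(\theta)\le\Big(1-\frac{\alpha_t\omega_t}{\beta}(2-\omega_t)\Big)\Big(\mathcal{L}(\theta_t)-\inf_{\theta\in\mathcal{N}_t}\mathcal{L}(\theta)\Big).$$
   Context: A function $\mathcal{L}$ satisfies $\alpha$-restricted strong convexity ($\alpha$-RSC) with respect to a tuple $(\mathcal{S},\theta)$, where $\mathcal{S}\subseteq\mathbb{R}^p$ and $\theta\in\mathbb{R}^p$ is fixed, if $\alpha>0$ and for every $\theta'\in\mathcal{S}$: $\mathcal{L}(\theta')\ge\mathcal{L}(\theta)+\langle\theta'-\theta,\nabla_\theta\mathcal{L}(\theta)\rangle+\frac{\alpha}{2}\|\theta'-\theta\|_2^2$. *)

(* Defs.v *)
From HB Require Import structures.
From mathcomp Require Import all_boot all_order all_algebra.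
From mathcomp Require Import all_classical all_reals all_analysis.
Set Implicit Arguments. Unset Strict Implicit. Unset Printing Implicit Defensive.
Import Order.TTheory GRing.Theory Num.Theory.
Import numFieldNormedType.Exports.
Local Open Scope classical_set_scope.
Local Open Scope ring_scope.

Definition dotp {R : realType} {p : nat} (u v : 'rV[R]_p) : R :=
  \sum_(i < p) u ord0 i * v ord0 i.

Definition sqnorm2 {R : realType} {p : nat} (u : 'rV[R]_p) : R := dotp u u.

Definition is_gradient {R : realType} {p : nat}
  (L : 'rV[R]_p -> R) (g : 'rV[R]_p -> 'rV[R]_p) : Prop :=
  forall x, differentiable L x /\ forall v, 'd L x v = dotp v (g x).

Definition C1_with_gradient {R : realType} {p : nat}
  (L : 'rV[R]_p -> R) (g : 'rV[R]_p -> 'rV[R]_p) : Prop :=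
  is_gradient L g /\ continuous g.

Definition RSC {R : realType} {p : nat} (L : 'rV[R]_p -> R)
  (g : 'rV[R]_p -> 'rV[R]_p) (alpha : R) (S : set 'rV[R]_p) (theta : 'rV[R]_p) : Prop :=
  0 < alpha /\
  forall theta', S theta' ->
    L theta' >= L theta + dotp (theta' - theta) (g theta)
                 + alpha / 2 * sqnorm2 (theta' - theta).

Definition inf_on {R : realType} {p : nat} (L : 'rV[R]_p -> R) (S : set 'rV[R]_p) : R :=
  inf (L @` S).

(* Main.v *)
Require Import Defs.
From HB Require Import structures.
From mathcomp Require Import all_boot all_order all_algebra.
From mathcomp Require Import all_classical all_reals all_analysis.
From mathcomp Require Import ring lra.
Import Order.TTheory GRing.Theory Num.Theory.
Import numFieldNormedType.Exports.
Local Open Scope classical_set_scope.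
Local Open Scope ring_scope.

Lemma dotpZl (R : realType) (p : nat) (a : R) (u v : 'rV[R]_p) :
  dotp (a *: u) v = a * dotp u v.
Proof. rewrite /dotp mulr_sumr; apply: eq_bigr => i _; by rewrite mxE mulrA. Qed.

Lemma dotpZr (R : realType) (p : nat) (a : R) (u v : 'rV[R]_p) :
  dotp u (a *: v) = a * dotp u v.
Proof. rewrite /dotp mulr_sumr; apply: eq_bigr => i _; by rewrite mxE mulrCA. Qed.

Lemma quad_lb (R : realType) (p : nat) (a : R) (v w : 'rV[R]_p) : 0 < a ->
  - (sqnorm2 w / (2 * a)) <= dotp v w + a / 2 * sqnorm2 v.
Proof.
move=> a0; rewrite -subr_ge0 opprK /sqnorm2 /dotp.
rewrite mulr_sumr mulr_suml -big_split -big_split /=.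
apply: sumr_ge0 => i _.
set x := v ord0 i; set y := w ord0 i.
have -> : x * y + a / 2 * (x * x) + y * y / (2 * a) = (a * x + y) ^+ 2 / (2 * a).
  by field; rewrite gt_eqF.
by apply: divr_ge0; [exact: sqr_ge0 | rewrite mulr_ge0 // ltW].
Qed.

Theorem lemma2 (R : realType) (p : nat)
  (L : 'rV[R]_p -> R) (g : 'rV[R]_p -> 'rV[R]_p)
  (B : set 'rV[R]_p) (theta : nat -> 'rV[R]_p) (eta : nat -> R)
  (t : nat) (N : set 'rV[R]_p) (alpha beta omega : R) :
  C1_with_gradient L g ->
  B (theta 0%N) ->
  (forall s : nat, theta s.+1 = theta s - eta s *: g (theta s)) ->
  (forall s : nat, (1 <= s)%N -> B (theta s)) ->
  (* RSC condition *)
  N !=set0 ->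
  N `<=` B ->
  ((N (theta t.+1) /\ (~ N (theta t) \/ L (theta t) <> inf_on L N))
   \/ (exists theta', N theta' /\ L theta' < L (theta t))) ->
  RSC L g alpha N (theta t) ->
  (* smoothness condition *)
  0 < beta ->
  (forall th th', B th -> B th' ->
     L th' <= L th + dotp (th' - th) (g th) + beta / 2 * sqnorm2 (th' - th)) ->
  alpha <= beta ->
  0 < omega < 2 ->
  eta t = omega / beta ->
  L (theta t.+1) - inf_on L N
    <= (1 - alpha * omega / beta * (2 - omega)) * (L (theta t) - inf_on L N).
Proof.
move=> _ B0 Hstep HB Nne NB _ [a0 Hrsc] b0 Hsm _ /andP[omg0 omg2] Heta.
have Bt : B (theta t) by case: t {Hstep Hrsc Heta} => [|s] //; apply: HB.
have Bt1 : B (theta t.+1) by apply: HB.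
set G := sqnorm2 (g (theta t)).
set D := L (theta t) - inf_on L N.
have HG : 0 <= G by rewrite /G /sqnorm2 /dotp sumr_ge0 // => i _; by rewrite -expr2 sqr_ge0.
have Hinf : L (theta t) - G / (2 * alpha) <= inf_on L N.
  apply: lb_le_inf; first by case: Nne => x Nx; exists (L x); exists x.
  move=> _ [x Nx <-]; have := Hrsc x Nx.
  have := (@quad_lb _ _ alpha (x - theta t) (g (theta t)) a0); rewrite -/G.
  move=> h1 h2; apply: le_trans h2; rewrite -addrA; exact: lerD.
have Hs := Hsm _ _ Bt Bt1.
have E : theta t.+1 - theta t = (- eta t) *: g (theta t).
  by rewrite Hstep scaleNr addrAC subrr add0r.
rewrite E dotpZl /sqnorm2 dotpZl dotpZr -/(sqnorm2 _) -/G Heta in Hs.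
set k := omega * (2 - omega) / (2 * beta).
have k0 : 0 <= k by rewrite divr_ge0 ?mulr_ge0 ?subr_ge0 ?ltW // mulr_gt0.
have H1 : L (theta t.+1) <= L (theta t) - k * G.
  apply: (le_trans Hs); rewrite le_eqVlt; apply/orP; left; apply/eqP.
  rewrite /k; field; rewrite gt_eqF //.
have H2 : 2 * alpha * D <= G.
  rewrite /D; have := Hinf; rewrite -subr_ge0 => h.
  have : 0 <= (2 * alpha) * (inf_on L N - (L (theta t) - G / (2 * alpha))).
    by rewrite mulr_ge0 // mulr_ge0 // ltW.
  have -> : 2 * alpha * (inf_on L N - (L (theta t) - G / (2 * alpha))) =
     G - 2 * alpha * (L (theta t) - inf_on L N) by field; rewrite gt_eqF.
  by rewrite subr_ge0.
have H3 := ler_wpM2l k0 H2.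
have E3 : k * (2 * alpha * D) = alpha * omega / beta * (2 - omega) * D.
  by rewrite /k; field; rewrite gt_eqF.
rewrite E3 in H3.
rewrite mulrBl mul1r -/D.
have : L (theta t.+1) - inf_on L N = D - (L (theta t) - L (theta t.+1)) by rewrite /D; ring.
move=> ->; lra.
Qed.
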